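(* Let $\mathcal L\subseteq\mathfrak P(S)$ be an algebraic lattice of sets and let $c$ be a closure operation on $\mathcal L$. Then $$\mathrm{Cl}^\mathrm{cons}(\{F^c\mid F\in\mathcal L_\mathrm{fin}\})=\mathrm{Cl}^\mathrm{cons}(\mathcal L^c)=\mathcal L^{c_f},$$ closures being taken in $\mathcal L$ with the constructible topology.
   Context: $S$ is a nonempty set. An algebraic lattice of sets is a family $\mathcal L\subseteq\mathfrak P(S)$ closed under arbitrary intersections and nonempty up-directed unions. For $F\subseteq S$ let $\langle F\rangle$ be the intersection of all members of $\mathcal L$ containing $F$; $A\in\mathcal L$ is finitely generated if $A=\langle F\rangle$ for a finite $F$, and $\mathcal L_\mathrm{fin}$ is the set of such. A closure operation on $\mathcal L$ is a map $c:\mathcal L\to\mathcal L$, $A\mapsto A^c$, with $A\subseteq A^c$, $A\subseteq B\Rightarrow A^c\subseteq B^c$, $(A^c)^c=A^c$. Its finite-type associate is $A^{c_f}:=\bigcup\{F^c\mid F\in\mathcal L_\mathrm{fin},\ F\subseteq A\}$. For a closure $d$, $\mathcal L^d:=\{A\in\mathcal L\mid A^d=A\}$. The Zariski topology on $\mathcal L$ has basis $\{A\in\mathcal L\mid G\subseteq A\}$, $G\subseteq S$ finite; it is spectral, and the constructible topology is the coarsest topology in which all its open quasi-compact sets are clopen. *)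

(* Defs.v *)
From mathcomp Require Import all_boot.
From mathcomp Require Import boolp classical_sets cardinality.
Set Implicit Arguments. Unset Strict Implicit. Unset Printing Implicit Defensive.
Local Open Scope classical_set_scope.

(** Algebraic lattice of sets: closed under arbitrary intersections
    (the empty intersection being the whole of S) and nonempty up-directed unions. *)
Definition updirected {S : Type} (D : set (set S)) : Prop :=
  forall A B, D A -> D B -> exists2 C, D C & (A `<=` C /\ B `<=` C).

Definition algebraic_lattice {S : Type} (L : set (set S)) : Prop :=
  (forall F : set (set S), F `<=` L -> L (\bigcap_(A in F) A)) /\
  (forall D : set (set S), D `<=` L -> D !=set0 -> updirected D ->
     L (\bigcup_(A in D) A)).

Definition gen {S : Type} (L : set (set S)) (F : set S) : set S :=
  \bigcap_(A in [set A | L A /\ F `<=` A]) A.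

Definition Lfin {S : Type} (L : set (set S)) : set (set S) :=
  [set A | L A /\ exists2 F : set S, finite_set F & A = gen L F].

(** Closure operation on L (a map L -> L; values outside L are irrelevant). *)
Definition closure_op {S : Type} (L : set (set S)) (c : set S -> set S) : Prop :=
  [/\ (forall A, L A -> L (c A)),
      (forall A, L A -> A `<=` c A),
      (forall A B, L A -> L B -> A `<=` B -> c A `<=` c B) &
      (forall A, L A -> c (c A) = c A)].

Definition finite_type_assoc {S : Type} (L : set (set S)) (c : set S -> set S)
  : set S -> set S :=
  fun A => \bigcup_(F in [set F | Lfin L F /\ F `<=` A]) c F.

Definition fixed_of {S : Type} (L : set (set S)) (d : set S -> set S) : set (set S) :=
  [set A | L A /\ d A = A].

Definition zariski_basic {S : Type} (L : set (set S)) (G : set S) : set (set S) :=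
  [set A | L A /\ G `<=` A].

Definition zariski_open {S : Type} (L : set (set S)) (V : set (set S)) : Prop :=
  V `<=` L /\
  forall A, V A -> exists G : set S,
     [/\ finite_set G, G `<=` A & zariski_basic L G `<=` V].

Definition zariski_quasi_compact {S : Type} (L : set (set S)) (K : set (set S)) : Prop :=
  K `<=` L /\
  forall C : set (set (set S)), C `<=` zariski_open L ->
    K `<=` \bigcup_(U in C) U ->
    exists D : set (set (set S)),
      [/\ finite_set D, D `<=` C & K `<=` \bigcup_(U in D) U].

(** Open sets of the topology on the space X generated by the subbasis sb
    (sets of sb are assumed to be subsets of X). *)
Definition generated_open {T : Type} (X : set T) (sb : set (set T)) (V : set T) : Prop :=
  V `<=` X /\
  forall x, V x -> exists F : set (set T),
    [/\ finite_set F, F `<=` sb, (forall U, F U -> U x) &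
         X `&` (\bigcap_(U in F) U) `<=` V].

(** Constructible topology: the coarsest topology on L in which all open
    quasi-compact sets of the Zariski topology are clopen, i.e. the topology
    generated by these sets and their complements in L. *)
Definition constructible_subbasis {S : Type} (L : set (set S)) : set (set (set S)) :=
  [set W | exists2 U, zariski_open L U /\ zariski_quasi_compact L U &
                      (W = U \/ W = L `\` U)].

Definition constructible_open {S : Type} (L : set (set S)) : set (set (set S)) :=
  generated_open L (constructible_subbasis L).

Definition cons_closure {S : Type} (L : set (set S)) (Y : set (set S)) : set (set S) :=
  [set A | L A /\ forall V, constructible_open L V -> V A -> V `&` Y !=set0].

(* Main.v *)
Require Import Defs.
From mathcomp Require Import all_boot.
From mathcomp Require Import boolp classical_sets cardinality.
Local Open Scope classical_set_scope.
Set Implicit Arguments. Unset Strict Implicit.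

Section H.
Variables (S : Type) (L : set (set S)) (c : set S -> set S).
Hypothesis hL : algebraic_lattice L.
Hypothesis hc : closure_op L c.

Lemma L_gen F : L (gen L F).
Proof. case: hL => hI _; apply: hI => A [] //. Qed.

Lemma gen_sub F : F `<=` gen L F.
Proof. by move=> x Fx A [_ FA]; apply: FA. Qed.

Lemma gen_min F B : L B -> F `<=` B -> gen L F `<=` B.
Proof. by move=> LB FB x; apply. Qed.

Lemma cL A : L A -> L (c A).
Proof. by case: hc => h _ _ _; apply: h. Qed.

Lemma cext A : L A -> A `<=` c A.
Proof. by case: hc => _ h _ _; apply: h. Qed.

Lemma cmono A B : L A -> L B -> A `<=` B -> c A `<=` c B.
Proof. by case: hc => _ _ h _; apply: h. Qed.

Lemma cidem A : L A -> c (c A) = c A.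
Proof. by case: hc => _ _ _ h; apply: h. Qed.

Lemma basic_open G : finite_set G ->
  zariski_open L (zariski_basic L G) /\ zariski_quasi_compact L (zariski_basic L G).
Proof.
move=> fG; split.
  split; first by move=> A [].
  by move=> A [LA GA]; exists G; split.
split; first by move=> A [].
move=> C oC cov.
have: zariski_basic L G (gen L G) by split; [exact: L_gen | exact: gen_sub].
move=> /cov [U CU Ug].
case: (oC U CU) => _ /(_ _ Ug) [G' [fG' G'g bG']].
exists [set U]; split.
- exact: finite_set1.
- by move=> W ->.
- move=> B [LB GB]; exists U => //; apply: bG'; split => //.
  by move=> y /G'g; apply: gen_min.
Qed.

Lemma subb1 G : finite_set G -> constructible_subbasis L (zariski_basic L G).
Proof. by move=> fG; exists (zariski_basic L G); [exact: basic_open | left]. Qed.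

Lemma subb2 G : finite_set G -> constructible_subbasis L (L `\` zariski_basic L G).
Proof. by move=> fG; exists (zariski_basic L G); [exact: basic_open | right]. Qed.

Let cf := finite_type_assoc L c.

Lemma ext_cf A : L A -> A `<=` cf A.
Proof.
move=> LA x Ax; exists (gen L [set x]).
  split; last by apply: gen_min => // y ->.
  split; first exact: L_gen.
  by exists [set x]; [exact: finite_set1|].
by apply: cext; [exact: L_gen | apply: gen_sub].
Qed.

Lemma fix_c_cf : fixed_of L c `<=` fixed_of L cf.
Proof.
move=> A [LA eA]; split => //; apply/seteqP; split; last exact: ext_cf.
move=> x [F [[LF _] FA] cFx].
rewrite -eA; exact: (cmono LF LA FA cFx).
Qed.

Lemma im_fix : c @` Lfin L `<=` fixed_of L c.
Proof. by move=> _ [F [LF _] <-]; split; [exact: cL | exact: cidem]. Qed.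

Lemma cl_mono Y Z : Y `<=` Z -> cons_closure L Y `<=` cons_closure L Z.
Proof.
move=> YZ A [LA h]; split => // V oV VA.
by case: (h V oV VA) => B [VB YB]; exists B; split => //; apply: YZ.
Qed.

Lemma closed_cf : cons_closure L (fixed_of L cf) `<=` fixed_of L cf.
Proof.
move=> A [LA h]; split => //; apply/seteqP; split; last exact: ext_cf.
move=> x [F [hF FA] cFx]; apply: contrapT => nAx.
have hF' := hF; case: hF' => [LF [G fG FG]].
pose V := zariski_basic L G `&` (L `\` zariski_basic L [set x]).
have oV : constructible_open L V.
  split; first by move=> B [[]].
  move=> B VB; exists [set zariski_basic L G; L `\` zariski_basic L [set x]]; split => //.
  - move=> W [->|->]; [exact: subb1 | apply: subb2; exact: finite_set1].
  - by move=> W [->|->]; case: VB.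
  - move=> B' [LB' hB']; split; apply: hB'; by [left|right].
have VA : V A.
  split; first by split => //; rewrite FG in FA; apply: subset_trans FA; exact: gen_sub.
  by split => //; move=> [_ h1]; apply: nAx; apply: h1.
case: (h V oV VA) => B [[[LB GB] [_ nB]] [_ eB]].
apply: nB; split => //; move=> y ->.
rewrite -eB; exists F => //; split => //.
by rewrite FG; apply: gen_min.
Qed.

Lemma dense_cf : fixed_of L cf `<=` cons_closure L (c @` Lfin L).
Proof.
move=> A [LA eA]; split => // V [VL oV] VA.
case: (oV A VA) => Fm [fFm subF FmA sub].
have : forall W, exists G, finite_set G /\ G `<=` A /\
    (zariski_open L W -> W A -> zariski_basic L G `<=` W).
  move=> W; case: (pselect (zariski_open L W /\ W A)) => [[oW WA]|nW].
    case: oW => _ /(_ A WA) [G [fG GA bG]]; exists G; split => //.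
  exists set0; split; first exact: finite_set0.
  by split => // oW WA; exfalso; apply: nW.
move=> /choice [g hg].
pose G := \bigcup_(W in Fm) g W.
have fG : finite_set G by apply: bigcup_finite => // W _; case: (hg W).
have GA : G `<=` A by move=> x [W _ gx]; case: (hg W) => _ [h _]; exact: h.
pose F := gen L G.
have hF : Lfin L F by split; [exact: L_gen | exists G].
have FA : F `<=` A := gen_min LA GA.
exists (c F); split; last by exists F.
apply: sub; split; first by apply: cL; exact: L_gen.
move=> W FmW; case: (subF W FmW) => U [oU qU] [eW|eW].
- case: (hg W) => _ [_ h].
  have oW : zariski_open L W by rewrite eW.
  apply: (h oW (FmA W FmW)); split; first by apply: cL; exact: L_gen.
  move=> x gx; apply: cext; first exact: L_gen.
  by apply: gen_sub; exists W.
- rewrite eW; split; first by apply: cL; exact: L_gen.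
  move=> UcF; have := FmA W FmW; rewrite eW => -[_ nUA]; apply: nUA.
  case: oU => _ /(_ _ UcF) [G' [_ G'c bG']].
  apply: bG'; split => //.
  move=> y /G'c cy; rewrite -eA; exists F => //.
Qed.

End H.

Theorem proposition4p5 (S : Type) (s0 : S) (L : set (set S)) (c : set S -> set S) :
  algebraic_lattice L -> closure_op L c ->
  cons_closure L (c @` Lfin L) = cons_closure L (fixed_of L c) /\
  cons_closure L (fixed_of L c) = fixed_of L (finite_type_assoc L c).
Proof.
move=> hL hc.
have a : cons_closure L (c @` Lfin L) `<=` cons_closure L (fixed_of L c).
  exact/cl_mono/im_fix.
have b : cons_closure L (fixed_of L c) `<=` fixed_of L (finite_type_assoc L c).
  apply: subset_trans (closed_cf hL hc); apply: cl_mono; exact: fix_c_cf.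
have d := dense_cf hL hc.
split; apply/seteqP; split => //.
- by apply: subset_trans d; exact: b.
- by apply: subset_trans (a); exact: d.
Qed.
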